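(* One-step MinPop Matching can be computed recursively via failure links and failure pops: $$(h(u,c),H(u,c)) = \begin{cases}(\mathrm{null},[\,]) & \text{if } u=\mathrm{null},\\ (\delta(u,c),[\,]) & \text{elif } \delta(u,c)\neq\mathrm{null},\\ \big(h(f(u),c),\; F(u)+H(f(u),c)\big) & \text{otherwise.}\end{cases}$$
   Context: Setting: WordPiece tokenization with vocabulary $V$, suffix indicator string $\sharp$ (e.g. ''##'', possibly empty). A trie is built from $V$ with root $r$ and node $r_\sharp$ representing $\sharp$; it may be augmented with nodes for $\sqcup$ and $\sharp\sqcup$, where $\sqcup$ is a whitespace character not in the vocabulary alphabet (not added to $V$). $\delta(u,c)$ is the child of $u$ along edge $c$, or null. $\chi_v$ is the string of node $v$; $\gamma_w$ is the node representing $w$, or null. Length of $w$: $|w|$ if $w$ does not start with $\sharp$, else $|w|-|\sharp|$. $p_w$: longest (by this length) non-empty prefix $w'\in V$, $w'\notin\{\varepsilon,\sharp\}$, of $w$, required to start with $\sharp$ if $w$ does; $p_w=\varepsilon$ if none, and $p_\sharp=\varepsilon$. $q_w:=\sharp w''$ where $w=p_w w''$. MinPop Matching: $(g(w),G(w)) := (\gamma_w,[\,])$ if $\gamma_w\neq\mathrm{null}$; else $(\mathrm{null},[\,])$ if $p_w=\varepsilon$; else $(g(q_w),[p_w]+G(q_w))$. One-step: $(h(u,c),H(u,c)) := (\mathrm{null},[\,])$ if $u=\mathrm{null}$, else $(g(\chi_u c),G(\chi_u c))$. Failure link and failure pops of node $v$, with $w=\chi_v$: $(f(v),F(v)) :=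 (\mathrm{null},[\,])$ if $p_w=\varepsilon$, else $(g(q_w),\,[p_w]+G(q_w))$. *)

(* Defs.v *)
(* Strings are sequences over an eqType alphabet Sigma;
   a trie node is identified with the string it represents (Some w), and
   null is None. *)
From mathcomp Require Import all_boot.
Set Implicit Arguments. Unset Strict Implicit. Unset Printing Implicit Defensive.

Section WordPiece.
Variables (Sigma : eqType)
          (V : seq (seq Sigma))
          (sharp : seq Sigma)     (* suffix indicator, possibly empty *)
          (sp : Sigma)
          (aug : bool).

Definition starts_sharp (w : seq Sigma) : bool := prefix sharp w.

Definition wlen (w : seq Sigma) : nat :=
  if starts_sharp w then size w - size sharp else size w.

(* nodes of the trie built from V, with the node r_sharp (and hence the path
   to it), possibly augmented with the nodes for ⊔ and ♯⊔ *)
Definition is_node (w : seq Sigma) : bool :=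
  [|| has (prefix w) V, prefix w sharp
    | aug && ((w == [:: sp]) || (w == sharp ++ [:: sp]))].

Definition gamma (w : seq Sigma) : option (seq Sigma) :=
  if is_node w then Some w else None.

Definition delta (s : seq Sigma) (c : Sigma) : option (seq Sigma) :=
  gamma (rcons s c).

Definition pcand (w x : seq Sigma) : bool :=
  [&& x \in V, x != [::], x != sharp, prefix x w
    & starts_sharp w ==> starts_sharp x].

Definition pw (w : seq Sigma) : seq Sigma :=
  foldl (fun best x => if wlen best < wlen x then x else best) [::]
        [seq x <- [seq take k w | k <- iota 0 (size w).+1] | pcand w x].

Definition qw (w : seq Sigma) : seq Sigma := sharp ++ drop (size (pw w)) w.

(* MinPop Matching (g(w), G(w)), computed with fuel; the recursion strictly
   decreases wlen, so fuel (size w).+1 is always sufficient. *)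
Fixpoint minpop_fuel (n : nat) (w : seq Sigma)
  : option (seq Sigma) * seq (seq Sigma) :=
  match n with
  | 0 => (None, [::])
  | n'.+1 =>
    if gamma w is Some v then (Some v, [::])
    else if pw w == [::] then (None, [::])
    else let r := minpop_fuel n' (qw w) in (r.1, pw w :: r.2)
  end.

Definition minpop (w : seq Sigma) := minpop_fuel (size w).+1 w.
Definition g (w : seq Sigma) := (minpop w).1.
Definition G (w : seq Sigma) := (minpop w).2.

Definition hH (u : option (seq Sigma)) (c : Sigma)
  : option (seq Sigma) * seq (seq Sigma) :=
  if u is Some s then (g (rcons s c), G (rcons s c)) else (None, [::]).

Definition fF (s : seq Sigma) : option (seq Sigma) * seq (seq Sigma) :=
  if pw s == [::] then (None, [::]) else (g (qw s), pw s :: G (qw s)).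

End WordPiece.

(* Main.v *)
Require Import Defs.
From mathcomp Require Import all_boot zify.
Set Implicit Arguments. Unset Strict Implicit.

Section Aux.
Variables (Sigma : eqType) (V : seq (seq Sigma)) (sharp : seq Sigma) (sp : Sigma) (aug : bool).
Notation is_node := (is_node V sharp sp aug).
Notation pw := (pw V sharp).
Notation qw := (qw V sharp).
Notation pcand := (pcand V sharp).
Notation minpop_fuel := (minpop_fuel V sharp sp aug).
Notation minpop := (minpop V sharp sp aug).
Notation g := (g V sharp sp aug).
Notation G := (G V sharp sp aug).
Notation gamma := (gamma V sharp sp aug).

Lemma node_rcons w c : is_node (rcons w c) -> is_node w.
Proof.
rewrite /Defs.is_node => /or3P [/hasP [x xV px]| ps | /andP [-> /orP [/eqP e|/eqP e]]].
- by apply/orP; left; apply/hasP; exists x => //; apply: prefix_trans px; apply: prefix_rcons.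
- by apply/or3P; apply: Or32; apply: prefix_trans ps; apply: prefix_rcons.
- case: w e => [|a w] /=; first by rewrite prefix0s orbT.
  by case: w.
- rewrite cats1 in e; move/rcons_inj: e => [-> _]; by rewrite prefix_refl orbT.
Qed.

Lemma gammaN w : ~~ is_node w -> gamma w = None.
Proof. by rewrite /Defs.gamma => /negbTE ->. Qed.

Lemma ss_rcons w c : ~~ is_node (rcons w c) ->
  starts_sharp sharp (rcons w c) = starts_sharp sharp w.
Proof.
move=> Hn; rewrite /starts_sharp.
case Hw: (prefix sharp w); first by rewrite (prefix_trans Hw (prefix_rcons _ _)).
apply/negbTE/negP => Hr.
case/prefixP: Hr => s2; case/lastP: s2 => [|s2 x].
  rewrite cats0 => E; move: Hn; rewrite /Defs.is_node -E prefix_refl.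
  by rewrite orbT.
rewrite -rcons_cat => /rcons_inj [E _].
by move: Hw; rewrite E prefix_prefix.
Qed.

Lemma notV w c : ~~ is_node (rcons w c) -> (rcons w c \in V) = false.
Proof.
move=> Hn; apply/negbTE/negP => HV; move: Hn; rewrite /Defs.is_node.
suff -> : has (prefix (rcons w c)) V by [].
by apply/hasP; exists (rcons w c) => //; apply: prefix_refl.
Qed.

Lemma pw_rcons w c : ~~ is_node (rcons w c) -> pw (rcons w c) = pw w.
Proof.
move=> Hn; rewrite /Defs.pw; congr foldl.
rewrite size_rcons -addn1 iotaD map_cat filter_cat.
have -> : [seq take k (rcons w c) | k <- iota (0 + (size w).+1) 1] = [:: rcons w c].
  by rewrite /= add0n -(size_rcons w c) take_size.
have -> : [seq x <- [:: rcons w c] | pcand (rcons w c) x] = [::].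
  by rewrite /= /Defs.pcand notV.
rewrite cats0.
have -> : [seq take k (rcons w c) | k <- iota 0 (size w).+1] = [seq take k w | k <- iota 0 (size w).+1].
  by apply/eq_in_map => k; rewrite mem_iota add0n ltnS => Hk; rewrite -cats1 takel_cat.
apply: eq_in_filter => x /mapP [k _ ->].
rewrite /Defs.pcand ss_rcons //.
by rewrite (prefix_take w k) (prefix_trans (prefix_take w k) (prefix_rcons _ _)).
Qed.

Lemma foldl_inv (T : eqType) (P : T -> Prop) (f : T -> T -> T) b l :
  P b -> (forall x y, P x -> P y -> P (f x y)) -> (forall y, y \in l -> P y) -> P (foldl f b l).
Proof.
elim: l b => [|a l IH] b //= Pb Hf Hl.
apply: IH; [apply: Hf => //; apply: Hl; rewrite inE eqxx | | move=> y Hy; apply: Hl; rewrite inE Hy orbT] => //.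
Qed.

Lemma pw_spec w : pw w = [::] \/ pcand w (pw w).
Proof.
rewrite /Defs.pw; apply: (@foldl_inv _ (fun x => x = [::] \/ pcand w x)); first by left.
  by move=> x y Hx Hy; case: ifP.
by move=> y; rewrite mem_filter => /andP [? _]; right.
Qed.


Lemma pw_size w : size (pw w) <= size w.
Proof.
case: (pw_spec w) => [->//|]; by case/and5P => _ _ _ /size_prefix.
Qed.

Lemma qw_rcons w c : ~~ is_node (rcons w c) -> qw (rcons w c) = rcons (qw w) c.
Proof.
move=> Hn; rewrite /Defs.qw pw_rcons // drop_rcons ?pw_size //.
by rewrite rcons_cat.
Qed.

Lemma ss_qw w : starts_sharp sharp (qw w).
Proof. exact: prefix_prefix. Qed.

Lemma wlen_qw w : pw w != [::] -> wlen sharp (qw w) < wlen sharp w.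
Proof.
move=> Hp; case: (pw_spec w) => [E|]; first by rewrite E in Hp.
case/and5P => _ Hne Hns Hpre Hss.
have Hsz := size_prefix Hpre.
have Hpos : 0 < size (pw w) by case: (pw w) Hne.
rewrite /wlen ss_qw /Defs.qw size_cat size_drop.
case: ifP Hss => /= Hsw Hsp.
- have Hlt : size sharp < size (pw w).
    rewrite ltn_neqAle size_prefix // andbT.
    apply/negP => /eqP E; move: Hsp; rewrite /starts_sharp prefixE E take_size => /eqP E2.
    by rewrite E2 eqxx in Hns.
  lia.
- lia.
Qed.

Lemma wlen_size w : wlen sharp w <= size w.
Proof. rewrite /wlen; case: ifP => // _; exact: leq_subr. Qed.

Lemma wlen_rcons_ss w c : starts_sharp sharp w -> wlen sharp (rcons w c) = (wlen sharp w).+1.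
Proof.
move=> H; rewrite /wlen H.
have H2 : starts_sharp sharp (rcons w c) by apply: prefix_trans H (prefix_rcons _ _).
rewrite H2 size_rcons; have := size_prefix H; lia.
Qed.

Lemma fuel_ok n m w : wlen sharp w < n -> wlen sharp w < m -> minpop_fuel n w = minpop_fuel m w.
Proof.
elim: n m w => [|n IH] [|m] w //= Hn Hm.
case: (gamma w) => // ; case: ifP => // /negbT Hp.
have Hq := wlen_qw Hp.
rewrite (IH m) //; apply: leq_trans Hq _; rewrite -ltnS //.
Qed.

Lemma minpopE n w : wlen sharp w < n -> minpop w = minpop_fuel n w.
Proof. move=> H; apply: fuel_ok => //; by rewrite ltnS wlen_size. Qed.

Lemma fuelS n w : minpop_fuel n.+1 w =
  if gamma w is Some v then (Some v, [::])
  else if pw w == [::] then (None, [::])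
  else ((minpop_fuel n (qw w)).1, pw w :: (minpop_fuel n (qw w)).2).
Proof. by []. Qed.

Definition ext (m : option (seq Sigma) * seq (seq Sigma)) c :=
  if m.1 is Some t then (g (rcons t c), m.2 ++ G (rcons t c)) else (None, m.2).

Lemma gen c w : minpop (rcons w c) = ext (minpop w) c.
Proof.
move: (leqnn (wlen sharp w)); move: {2}(wlen sharp w) => n.
elim: n w => [|n IH] w Hw.
all: case Hnd: (is_node w).
1,3: have -> : minpop w = (Some w, [::]) by rewrite /Defs.minpop /= /Defs.gamma Hnd.
1,2: by rewrite /ext /= /Defs.g /Defs.G; case: (minpop (rcons w c)).
all: have Hn' : ~~ is_node (rcons w c) by apply/negP => /node_rcons; rewrite Hnd.
all: have E1 : minpop (rcons w c) = minpop_fuel (size w).+2 (rcons w c) by rewrite /Defs.minpop size_rcons.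
all: have E2 : minpop w = minpop_fuel (size w).+1 w by [].
all: rewrite E1 E2 (fuelS (size w).+1) (fuelS (size w) w) (gammaN Hn') (@gammaN w) ?Hnd // pw_rcons //.
all: case: ifP => [//|/negbT Hp].
all: have Hq := wlen_qw Hp.
1: by move: Hq; rewrite leqn0 in Hw; rewrite (eqP Hw).
have Hqs := ss_qw w.
rewrite qw_rcons // -minpopE; last by rewrite wlen_rcons_ss //; apply: leq_trans Hq (wlen_size w).
rewrite -minpopE; last by apply: leq_trans Hq (wlen_size w).
rewrite IH; last by rewrite -ltnS; apply: leq_trans Hq Hw.
rewrite /ext /=; by case: (minpop (qw w)) => [[t|] P].
Qed.

End Aux.

Theorem lemma4 (Sigma : eqType) (V : seq (seq Sigma)) (sharp : seq Sigma)
  (sp : Sigma) (aug : bool)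
  (Hsp_V : all (fun w => sp \notin w) V) (Hsp_sharp : sp \notin sharp)
  (u : option (seq Sigma))
  (Hu : if u is Some s then is_node V sharp sp aug s else true)
  (c : Sigma) :
  hH V sharp sp aug u c =
  match u with
  | None => (None, [::])
  | Some s =>
      match delta V sharp sp aug s c with
      | Some v => (Some v, [::])
      | None =>
          let fu := fF V sharp sp aug s in
          ((hH V sharp sp aug fu.1 c).1,
           fu.2 ++ (hH V sharp sp aug fu.1 c).2)
      end
  end.
Proof.
case: u Hu => [s Hs|] //=.
rewrite /delta /Defs.gamma.
case Hn: (is_node V sharp sp aug (rcons s c)).
  by rewrite /g /G /minpop /= /Defs.gamma Hn.
have Hn' : ~~ is_node V sharp sp aug (rcons s c) by rewrite Hn.
have E1 : minpop V sharp sp aug (rcons s c) = minpop_fuel V sharp sp aug (size s).+2 (rcons s c) by rewrite /Defs.minpop size_rcons.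
rewrite /g /G E1 (@fuelS _ V sharp sp aug (size s).+1) gammaN // (pw_rcons Hn') /fF.
case: ifP => [//|/negbT Hp].
have Hq := wlen_qw Hp.
rewrite (qw_rcons Hn') -(minpopE V sp aug); last by rewrite wlen_rcons_ss ?ss_qw //; apply: leq_trans Hq (wlen_size _ s).
rewrite gen /ext /g /G /=.
by case: (minpop V sharp sp aug (qw V sharp s)) => [[t|] P] /=; rewrite ?cats0.
Qed.
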